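(* Let $k<n$ and let $G=[I_k\mid A]$ be a $k\times n$ binary matrix in systematic form, where $A$ is a $k\times(n-k)$ binary matrix whose $i$-th row is $g_i\in(\mathbb{F}_2)^{n-k}$. Let $\mathcal{C}\subseteq(\mathbb{F}_2)^n$ be the binary linear code spanned by the rows of $G$. Let $X_1,\dots,X_n$ be i.i.d. $\mathbb{F}_2$-valued random variables, and for $x\in\mathbb{F}_2$ write $P(X_1=x)=\tfrac12+v(x)$. Thus $v(0)=-v(1)$. Use the convention $v(\cdot)^0=1$ and $v(\cdot)^1=v(\cdot)$. Let $\bar Y=G(X_1,\dots,X_n)^T$. For $\gamma=(\gamma_1,\dots,\gamma_k)\in(\mathbb{F}_2)^k$ and $b=(b_1,\dots,b_n)\in(\mathbb{F}_2)^n$ of Hamming weight $W(b)$, define $$T(b,\gamma)=\frac{1}{2^{\,n-W(b)}}\sum_{\omega=(\omega_{k+1},\dots,\omega_n)\in(\mathbb{F}_2)^{n-k}}\ \prod_{i=1}^{k}v(\gamma_i+g_i\cdot\omega)^{b_i}\prod_{j=k+1}^{n}v(\omega_j)^{b_j},$$ where $g_i\cdot\omega$ denotes the standard dot product over $\mathbb{F}_2$. Then: (i) $P(\bar Y=\gamma)=\sum_{b\in(\mathbb{F}_2)^n}T(b,\gamma)$; (ii) $T(b,\gamma)=0$ for every $b\notin\mathcal{C}$ and every $\gamma$; (iii) $T(0,\gamma)=2^{-k}$. Consequently, $$P(\bar Y=\gamma)-\frac{1}{2^k}=\sum_{b\in\mathcal{C}\setminus\{0\}}T(b,\gamma)$$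 for every $\gamma\in(\mathbb{F}_2)^k$.
   Context: A binary matrix $G$ is in systematic form if its first $k$ columns form the $k\times k$ identity matrix $I_k$. The Hamming weight $W(b)$ of $b\in(\mathbb{F}_2)^n$ is the number of indices $i$ with $b_i=1$. *)

(* Defs.v *)
From HB Require Import structures.
From mathcomp Require Import all_boot all_order all_algebra.
Set Implicit Arguments. Unset Strict Implicit. Unset Printing Implicit Defensive.
Import Order.TTheory GRing.Theory Num.Theory.
Local Open Scope ring_scope.

Definition sysG (k m : nat) (A : 'M['F_2]_(k, m)) : 'M['F_2]_(k, k + m) :=
  row_mx 1%:M A.

Definition wt (n : nat) (b : 'rV['F_2]_n) : nat := #|[set j : 'I_n | b 0 j != 0]|.

Definition pw (R : ringType) (r : R) (e : 'F_2) : R := if e == 0 then 1 else r.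

(* P(Ybar = gamma) where Ybar = G X^T, X_1..X_n i.i.d. with P(X_1 = x) = p x:
   the joint law of (X_1,..,X_n) is the product measure. *)
Definition probY (R : ringType) (k n : nat) (p : 'F_2 -> R)
    (G : 'M['F_2]_(k, n)) (gam : 'rV['F_2]_k) : R :=
  \sum_(x : 'rV['F_2]_n | G *m x^T == gam^T) \prod_(j < n) p (x 0 j).

Definition vfun (R : fieldType) (p : 'F_2 -> R) (x : 'F_2) : R := p x - 2%:R^-1.

(* The quantity T(b, gamma); the i-th row of A is g_i, and
   omega = (omega_{k+1},...,omega_n) is indexed by 'I_m. *)
Definition Tterm (R : fieldType) (k m : nat) (p : 'F_2 -> R)
    (A : 'M['F_2]_(k, m)) (b : 'rV['F_2]_(k + m)) (gam : 'rV['F_2]_k) : R :=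
  (2%:R ^+ ((k + m) - wt b))^-1 *
  \sum_(om : 'rV['F_2]_m)
     ((\prod_(i < k) pw (vfun p (gam 0 i + \sum_(j < m) A i j * om 0 j))
                        (b 0 (lshift m i))) *
      (\prod_(j < m) pw (vfun p (om 0 j)) (b 0 (rshift k j)))).

(* Main.v *)
Require Import Defs.
From HB Require Import structures.
From mathcomp Require Import all_boot all_order all_algebra lra.
Import Order.TTheory GRing.Theory Num.Theory.
Local Open Scope ring_scope.

Lemma F2_cases (x : 'F_2) : x = 0 \/ x = 1.
Proof. case: x => [[|[|i]] Hi]; [left|right|]; try by apply/val_inj. by []. Qed.

Lemma F2_oppE (x : 'F_2) : - x = x.
Proof. by case: (F2_cases x) => ->; apply/eqP. Qed.

Lemma sum_F2 (R : nmodType) (F : 'F_2 -> R) : \sum_(e : 'F_2) F e = F 0 + F 1.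
Proof.
rewrite (bigD1 0) //= (bigD1 1) //= big1 ?addr0 // => e /andP [h1 h0].
by case: (F2_cases e) h1 h0 => ->.
Qed.

Lemma expand_prod (R : fieldType) (n : nat) (f : 'I_n -> R) :
  \prod_(j < n) (2%:R^-1 + f j) =
  \sum_(b : 'rV['F_2]_n) (2%:R ^+ (n - wt b))^-1 * \prod_(j < n) pw (f j) (b 0 j).
Proof.
pose q (j : 'I_n) (e : 'F_2) : R := if e == 0 then 2%:R^-1 else f j.
have -> : \prod_(j < n) (2%:R^-1 + f j) = \prod_(j < n) \sum_(e : 'F_2) q j e.
  by apply: eq_bigr => j _; rewrite sum_F2 /q /=.
rewrite bigA_distr_bigA /=.
rewrite (reindex (fun b : 'rV['F_2]_n => [ffun j => b 0 j])) /=; last first.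
  exists (fun φ : {ffun 'I_n -> 'F_2} => \row_j φ j) => b _.
    by apply/rowP => j; rewrite !mxE ffunE.
  by apply/ffunP => j; rewrite ffunE mxE.
apply: eq_bigr => b _.
have -> : (2%:R ^+ (n - wt b))^-1 = \prod_(j < n) (if b 0 j == 0 then 2%:R^-1 else 1) :> R.
  rewrite -big_mkcond /= -exprVn.
  have -> : (n - wt b)%N = #|[pred j : 'I_n | b 0 j == 0]|.
    rewrite /wt -{1}(card_ord n) -(cardsC [set j : 'I_n | b 0 j != 0]) addKn.
    by apply: eq_card => j; rewrite !inE negbK.
  by rewrite -prodr_const.
rewrite -big_split /=; apply: eq_bigr => j _; rewrite ffunE /q /pw.
by case: (b 0 j == 0); rewrite ?mulr1 ?mul1r.
Qed.

Lemma F2_11 : (1 : 'F_2) + 1 = 0. Proof. by apply/eqP. Qed.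
Lemma F2_10 : ((1 : 'F_2) == 0) = false. Proof. by apply/eqP. Qed.

Lemma Tterm_zero (R : realFieldType) (k m : nat) (A : 'M['F_2]_(k, m)) (p : 'F_2 -> R)
  (hp1 : p 0 + p 1 = 1) (b : 'rV['F_2]_(k + m)) (gam : 'rV['F_2]_k) :
  ~~ (b <= sysG A)%MS -> Tterm p A b gam = 0.
Proof.
move=> hb.
have [j0 hj0] : exists j0, rsubmx b 0 j0 != (lsubmx b *m A) 0 j0.
  case: (boolP [exists j, rsubmx b 0 j != (lsubmx b *m A) 0 j]) => [/existsP//|/existsPn H].
  have hr : rsubmx b = lsubmx b *m A.
    by apply/rowP => j; have := H j; rewrite negbK => /eqP.
  move: hb; rewrite -[b]hsubmxK hr /sysG -{1}(mulmx1 (lsubmx b)) -mul_mx_row.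
  by rewrite submxMl.
pose s (e : 'F_2) : R := pw (-1) e.
have hv x d : vfun p (x + d) = s d * vfun p x.
  rewrite /s /pw /vfun; case: (F2_cases d) => ->; rewrite ?addr0 ?mul1r //=.
  case: (F2_cases x) => ->; rewrite ?add0r ?F2_11 ?F2_10 /=; lra.
have hpw r d e : pw (s d * r) e = s (d * e) * pw r e.
  rewrite /s /pw; case: (F2_cases d) => ->; case: (F2_cases e) => ->;
  rewrite ?mul0r ?mulr0 ?mul1r ?mulr1 ?eqxx ?F2_10 /= ?mulN1r ?mul1r //.
have hs d1 d2 : s (d1 + d2) = s d1 * s d2.
  rewrite /s /pw; case: (F2_cases d1) => ->; case: (F2_cases d2) => ->;
  rewrite ?add0r ?addr0 ?F2_11 ?eqxx ?F2_10 /= ?mul1r ?mulr1 ?mulN1r ?opprK //.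
have hs0 : s 0 = 1 by rewrite /s /pw eqxx.
have hsum (I : Type) (r : seq I) (P : pred I) (F : I -> 'F_2) :
    \prod_(i <- r | P i) s (F i) = s (\sum_(i <- r | P i) F i).
  by rewrite (big_morph s hs hs0).
rewrite /Tterm; apply/eqP; rewrite mulf_eq0; apply/orP; right; apply/eqP.
pose e := \row_j ((j == j0)%:R : 'F_2).
set S := \sum_om _.
suff : S = - S by lra.
rewrite {1}/S (reindex_inj (addIr e)) /= -sumrN; apply: eq_bigr => om _.
have h1 i : gam 0 i + \sum_j A i j * (om + e) 0 j
            = (gam 0 i + \sum_j A i j * om 0 j) + A i j0.
  rewrite -addrA; congr (_ + _).
  under eq_bigr do rewrite !mxE mulrDr.
  rewrite big_split /=; congr (_ + _).
  rewrite (bigD1 j0) //= eqxx mulr1 big1 ?addr0 // => j /negPf->; by rewrite mulr0.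
have h2 j : (om + e) 0 j = om 0 j + (j == j0)%:R by rewrite !mxE.
under eq_bigr do rewrite h1 hv hpw.
under [X in _ * X]eq_bigr do rewrite h2 hv hpw.
rewrite !big_split /= !hsum.
have -> : \sum_(j < m) (j == j0)%:R * b 0 (rshift k j) = b 0 (rshift k j0).
  rewrite (bigD1 j0) //= eqxx mul1r big1 ?addr0 // => j /negPf->; by rewrite mul0r.
rewrite mulrACA -hs.
have -> : \sum_(i < k) A i j0 * b 0 (lshift m i) + b 0 (rshift k j0) = 1.
  move: hj0; rewrite !mxE.
  under eq_bigr do rewrite mxE mulrC.
  move: (\sum_(i < k) _) (b 0 _) => x y.
  case: (F2_cases x) => ->; case: (F2_cases y) => ->; rewrite ?eqxx //.
  by move=> _; apply/eqP.
  by move=> _; apply/eqP.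
have -> : s 1 = -1.
  by rewrite /s /pw F2_10.
by rewrite mulN1r.
Qed.

Lemma probY_eq (R : ringType) (k m : nat) (A : 'M['F_2]_(k, m)) (p : 'F_2 -> R)
   (gam : 'rV['F_2]_k) :
  probY p (sysG A) gam = \sum_(om : 'rV['F_2]_m)
     (\prod_(i < k) p (gam 0 i + \sum_(j < m) A i j * om 0 j)) *
     \prod_(j < m) p (om 0 j).
Proof.
rewrite /probY (reindex_onto (fun om : 'rV['F_2]_m => row_mx (gam - om *m A^T) om)
   (fun x => rsubmx x)) /=; last first.
  move=> x /eqP hx.
  rewrite -{3}[x]hsubmxK; congr row_mx.
  move: hx; rewrite -{1}[x]hsubmxK /sysG tr_row_mx mul_row_col mul1mx => hx.
  have hx' : lsubmx x + rsubmx x *m A^T = gam.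
    by rewrite -[gam]trmxK -hx linearD /= trmx_mul !trmxK.
  by rewrite -hx' addrK.
rewrite (eq_bigl xpredT) => [|om]; last first.
  rewrite row_mxKr eqxx andbT /sysG tr_row_mx mul_row_col mul1mx.
  by rewrite linearB /= trmx_mul trmxK subrK eqxx.
apply: eq_bigr => om _; rewrite big_split_ord /=; congr (_ * _).
  apply: eq_bigr => i _; rewrite row_mxEl !mxE F2_oppE; congr (p (_ + _)).
  by apply: eq_bigr => j _; rewrite mxE mulrC.
by apply: eq_bigr => j _; rewrite row_mxEr.
Qed.

Lemma Tterm0 (R : fieldType) (k m : nat) (A : 'M['F_2]_(k, m)) (p : 'F_2 -> R)
   (gam : 'rV['F_2]_k) (h2 : (2%:R : R) != 0) : Tterm p A 0 gam = (2%:R ^+ k)^-1.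
Proof.
rewrite /Tterm.
have -> : wt (0 : 'rV['F_2]_(k + m)) = 0%N.
  by rewrite /wt; apply/eqP; rewrite cards_eq0; apply/eqP/setP => j; rewrite !inE mxE eqxx.
rewrite subn0.
rewrite (eq_bigr (fun _ => 1)) => [|om _]; last first.
  by rewrite !big1 ?mulr1 // => j _; rewrite mxE /pw eqxx.
rewrite sumr_const card_mx card_Fp // mul1n natrX exprD invfM -mulrA mulVf ?mulr1 //.
by rewrite expf_neq0.
Qed.

Theorem mainTheorem2 (R : realFieldType) (k m : nat) (hm : (0 < m)%N)
    (A : 'M['F_2]_(k, m)) (p : 'F_2 -> R)
    (hp0 : forall x, 0 <= p x) (hp1 : p 0 + p 1 = 1) :
  (forall gam : 'rV['F_2]_k,
      probY p (sysG A) gam = \sum_(b : 'rV['F_2]_(k + m)) Tterm p A b gam) /\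
  (forall (b : 'rV['F_2]_(k + m)) (gam : 'rV['F_2]_k),
      ~~ (b <= sysG A)%MS -> Tterm p A b gam = 0) /\
  (forall gam : 'rV['F_2]_k, Tterm p A 0 gam = (2%:R ^+ k)^-1) /\
  (forall gam : 'rV['F_2]_k,
      probY p (sysG A) gam - (2%:R ^+ k)^-1
      = \sum_(b : 'rV['F_2]_(k + m) | (b <= sysG A)%MS && (b != 0))
          Tterm p A b gam).
Proof.
have h2 : (2%:R : R) != 0 by rewrite pnatr_eq0.
have partI : forall gam : 'rV['F_2]_k,
      probY p (sysG A) gam = \sum_(b : 'rV['F_2]_(k + m)) Tterm p A b gam.
  move=> gam; rewrite probY_eq /Tterm.
  under [RHS]eq_bigr do rewrite mulr_sumr.
  rewrite [RHS]exchange_big /=; apply: eq_bigr => om _.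
  pose z := row_mx (\row_i (gam 0 i + \sum_(j < m) A i j * om 0 j)) om.
  have -> : (\prod_(i < k) p (gam 0 i + \sum_(j < m) A i j * om 0 j)) *
     \prod_(j < m) p (om 0 j) = \prod_(j < k + m) (2%:R^-1 + vfun p (z 0 j)).
    rewrite big_split_ord /=; congr (_ * _); apply: eq_bigr => i _;
    by rewrite /z ?row_mxEl ?row_mxEr ?mxE /vfun [2%:R^-1 + _]addrC subrK.
  rewrite expand_prod; apply: eq_bigr => b _; congr (_ * _).
  rewrite big_split_ord /=; congr (_ * _); apply: eq_bigr => i _;
  by rewrite /z ?row_mxEl ?row_mxEr ?mxE.
have partII := @Tterm_zero R k m A p hp1.
have partIII : forall gam : 'rV['F_2]_k, Tterm p A 0 gam = (2%:R ^+ k)^-1.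
  by move=> gam; apply: Tterm0.
split; first exact: partI.
split; first exact: partII.
split; first exact: partIII.
move=> gam; rewrite partI (bigID (fun b => (b <= sysG A)%MS)) /=.
rewrite [\sum_(i | ~~ _) _]big1 ?addr0; last by move=> b /partII ->.
rewrite (bigD1 0) ?sub0mx //= partIII addrAC subrr add0r.
by apply: eq_bigl => b; rewrite andbC.
Qed.
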